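(* Let $T\ge1$, let the label set be $\{0,1\}^T$ (so $k=2^T$, identified with $\{1,\dots,k\}$), and let $L_{Ham,T}(\hat y,y)=\frac1T\sum_{t=1}^T[\hat y_t\ne y_t]$ be the normalized Hamming loss, with quadratic surrogate $\Phi_{quad}(f,y)=\frac1{2k}\|f+L_{Ham,T}(:,y)\|_2^2$. If the scores are constrained to the column space $\mathcal{F}_{Ham,T}=\mathrm{span}(L_{Ham,T})$, then $$H_{\Phi_{quad},L_{Ham,T},\mathcal{F}_{Ham,T}}(\varepsilon)=\frac{\varepsilon^2}{8T},\qquad0\le\varepsilon\le1.$$
   Context: $\mathrm{pred}(f)$ is the smallest index maximizing $f_c$ (under the fixed identification of labels with $\{1,\dots,k\}$). For $q\in\Delta_k$: $\ell(f,q)=\sum_cq_cL(\mathrm{pred}(f),c)$, $\phi(f,q)=\sum_cq_c\Phi(f,c)$, $\delta\ell(f,q)=\ell(f,q)-\inf_{\hat f\in\mathcal{F}}\ell(\hat f,q)$, $\delta\phi(f,q)=\phi(f,q)-\inf_{\hat f\in\mathcal{F}}\phi(\hat f,q)$; calibration function $H_{\Phi,L,\mathcal{F}}(\varepsilon)=\inf\{\delta\phi(f,q):f\in\mathcal{F},q\in\Delta_k,\delta\ell(f,q)\ge\varepsilon\}$ ($+\infty$ if empty). *)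

(* Defs.v *)
From HB Require Import structures.
From mathcomp Require Import all_boot all_order all_algebra.
From mathcomp Require Import all_classical all_reals ereal.

Set Implicit Arguments. Unset Strict Implicit. Unset Printing Implicit Defensive.
Import Order.TTheory GRing.Theory Num.Theory.
Local Open Scope classical_set_scope.
Local Open Scope ring_scope.

(* Labels are identified with indices 0..k-1 (the paper's 1..k, shifted).
   Scores f and distributions q are column vectors 'cV[R]_k. *)

Definition pred_idx (R : realType) (k : nat) (f : 'cV[R]_k) : nat :=
  find (fun i : 'I_k => [forall j : 'I_k, f j 0 <= f i 0]) (enum 'I_k).

Definition simplex (R : realType) (k : nat) : set 'cV[R]_k :=
  [set q | (forall c : 'I_k, 0 <= q c 0) /\ \sum_(c < k) q c 0 = 1].

Definition task_risk (R : realType) (k : nat) (L : nat -> nat -> R)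
  (f q : 'cV[R]_k) : R := \sum_(c < k) q c 0 * L (pred_idx f) c.

Definition surr_risk (R : realType) (k : nat) (Phi : 'cV[R]_k -> 'I_k -> R)
  (f q : 'cV[R]_k) : R := \sum_(c < k) q c 0 * Phi f c.

Definition excess_task (R : realType) (k : nat) (L : nat -> nat -> R)
  (F : set 'cV[R]_k) (f q : 'cV[R]_k) : R :=
  task_risk L f q - inf [set task_risk L g q | g in F].

Definition excess_surr (R : realType) (k : nat) (Phi : 'cV[R]_k -> 'I_k -> R)
  (F : set 'cV[R]_k) (f q : 'cV[R]_k) : R :=
  surr_risk Phi f q - inf [set surr_risk Phi g q | g in F].

(* calibration function H_{Phi,L,F}(eps); ereal_inf of the empty set is +oo *)
Definition calibration (R : realType) (k : nat) (Phi : 'cV[R]_k -> 'I_k -> R)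
  (L : nat -> nat -> R) (F : set 'cV[R]_k) (eps : R) : \bar R :=
  ereal_inf [set (excess_surr Phi F fq.1 fq.2)%:E | fq in
     [set fq : 'cV[R]_k * 'cV[R]_k | F fq.1 /\ @simplex R k fq.2 /\
                                     eps <= excess_task L F fq.1 fq.2]].

(* Label index y in 0..2^T-1 encodes the bit vector (bit_t(y))_{t<T}. *)
Definition label_bit (y t : nat) : bool := odd (y %/ 2 ^ t).

Definition ham_loss (R : realType) (T : nat) (yh y : nat) : R :=
  T%:R^-1 * \sum_(t < T) (label_bit yh t != label_bit y t)%:R.

Definition ham_mx (R : realType) (T : nat) : 'M[R]_(2 ^ T) :=
  \matrix_(i < 2 ^ T, j < 2 ^ T) @ham_loss R T i j.

Definition ham_span (R : realType) (T : nat) : set 'cV[R]_(2 ^ T) :=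
  [set f | exists theta : 'cV[R]_(2 ^ T), f = @ham_mx R T *m theta].

Definition quad_surr (R : realType) (T : nat) (f : 'cV[R]_(2 ^ T))
  (y : 'I_(2 ^ T)) : R :=
  (2 * (2 ^ T)%:R)^-1 * \sum_(c < 2 ^ T) (f c 0 + @ham_mx R T c y) ^+ 2.

(* Main.v *)
Require Import Defs.
From HB Require Import structures.
From mathcomp Require Import all_boot all_order all_algebra.
From mathcomp Require Import all_classical all_reals ereal.
From mathcomp Require Import ring lra zify.

Set Implicit Arguments. Unset Strict Implicit. Unset Printing Implicit Defensive.
Import Order.TTheory GRing.Theory Num.Theory.
Local Open Scope classical_set_scope.
Local Open Scope ring_scope.

Lemma bit_small c T : (c < 2 ^ T)%N -> label_bit c T = false.
Proof. by move=> h; rewrite /label_bit divn_small. Qed.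

Lemma bit_top c T : (c < 2 ^ T)%N -> label_bit (2 ^ T + c) T = true.
Proof.
move=> h; rewrite /label_bit divnDl // divnn expn_gt0 /= divn_small //.
Qed.

Lemma bit_shift c T t : (c < 2 ^ T)%N -> (t < T)%N ->
  label_bit (2 ^ T + c) t = label_bit c t.
Proof.
move=> h ht; rewrite /label_bit divnDl; last by rewrite dvdn_exp2l // ltnW.
rewrite -(subnK (ltnW ht)) expnD mulnK ?expn_gt0 // oddD oddX orbF.
by rewrite subn_eq0 leqNgt ht.
Qed.

Fixpoint enc (b : nat -> bool) (T : nat) : nat :=
  if T is T'.+1 then (b T' * 2 ^ T' + enc b T')%N else 0%N.

Lemma enc_lt b T : (enc b T < 2 ^ T)%N.
Proof.
elim: T => [|T IH] //=; rewrite expnS mul2n -addnn.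
case: (b T) => /=; lia.
Qed.

Lemma enc_bit b T s : (s < T)%N -> label_bit (enc b T) s = b s.
Proof.
elim: T => [|T IH] // hs /=.
have hl := enc_lt b T.
case: (ltngtP s T) hs => [hsT _|hsT|-> _].
- by case: (b T); rewrite /= ?mul1n ?mul0n ?add0n ?bit_shift // IH.
- by rewrite ltnS leqNgt hsT.
- by case: (b T) => /=; rewrite ?mul1n ?mul0n ?add0n ?bit_top ?bit_small.
Qed.
Lemma Qsum (R : realType) T (d0 : R) (d : nat -> R) :
  \sum_(c < 2 ^ T) (d0 + \sum_(t < T) d t * (label_bit c t)%:R) ^+ 2 =
  (2 ^ T)%:R * ((d0 + (\sum_(t < T) d t) / 2) ^+ 2 + \sum_(t < T) d t ^+ 2 / 4).
Proof.
elim: T d0 => [|T IH] d0.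
  by rewrite expn0 big_ord1 !big_ord0; field.
rewrite [in LHS]expnS [in LHS]mul2n -[in LHS]addnn big_split_ord /=.
have E1 : forall c : 'I_(2 ^ T),
   (d0 + \sum_(t < T.+1) d t * (label_bit (lshift (2 ^ T) c) t)%:R) ^+ 2
   = (d0 + \sum_(t < T) d t * (label_bit c t)%:R) ^+ 2.
  move=> c; rewrite big_ord_recr /= bit_small // mulr0 addr0.
  done.
have E2 : forall c : 'I_(2 ^ T),
   (d0 + \sum_(t < T.+1) d t * (label_bit (rshift (2 ^ T) c) t)%:R) ^+ 2
   = ((d0 + d T) + \sum_(t < T) d t * (label_bit c t)%:R) ^+ 2.
  move=> c; rewrite big_ord_recr /= bit_top // mulr1.
  rewrite (eq_bigr (fun t : 'I_T => d t * (label_bit c t)%:R)); last first.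
    by move=> t _; rewrite bit_shift.
  congr (_ ^+ 2); ring.
rewrite (eq_bigr _ (fun c _ => E1 c)) (eq_bigr _ (fun c _ => E2 c)) !IH.
rewrite !big_ord_recr /= expnS natrM.
by field.
Qed.
Lemma cs_ineq (R : realFieldType) T (e : nat -> R) : (0 < T)%N ->
  (\sum_(t < T) e t) ^+ 2 <= T%:R * \sum_(t < T) e t ^+ 2.
Proof.
move=> hT.
set S := \sum_(t < T) e t; set Q := \sum_(t < T) e t ^+ 2.
have hT' : (0 : R) < T%:R by rewrite ltr0n.
pose m := S / T%:R.
have H0 : 0 <= \sum_(t < T) (e t - m) ^+ 2 by apply: sumr_ge0 => t _; exact: sqr_ge0.
have E : \sum_(t < T) (e t - m) ^+ 2 = Q - 2 * m * S + T%:R * m ^+ 2.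
  rewrite (eq_bigr (fun t : 'I_T => (e t ^+ 2 - 2 * m * e t) + m ^+ 2)); last first.
    by move=> t _; rewrite /m; ring.
  rewrite big_split /=.
  rewrite sumrB.
  rewrite -mulr_sumr.
  rewrite sumr_const card_ord.
  by rewrite /Q /S -[m ^+ 2 *+ T]mulr_natl.
rewrite E in H0.
have E2 : T%:R * (Q - 2 * m * S + T%:R * m ^+ 2) = T%:R * Q - S ^+ 2.
  rewrite /m; field; lra.
have : 0 <= T%:R * (Q - 2 * m * S + T%:R * m ^+ 2) by apply: mulr_ge0 => //; lra.
rewrite E2; lra.
Qed.

Lemma bitneq (R : realType) (b1 b2 : bool) :
  ((b1 != b2)%:R : R) = b2%:R + b1%:R * (1 - 2 * b2%:R).
Proof. by case: b1; case: b2 => /=; ring. Qed.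

Definition A0 (R : realType) T (th : 'cV[R]_(2 ^ T)) : R :=
  T%:R^-1 * \sum_(y < 2 ^ T) th y 0 * \sum_(t < T) (label_bit y t)%:R.
Definition Aco (R : realType) T (th : 'cV[R]_(2 ^ T)) (t : nat) : R :=
  T%:R^-1 * \sum_(y < 2 ^ T) th y 0 * (1 - 2 * (label_bit y t)%:R).

Lemma ham_affine (R : realType) T (th : 'cV[R]_(2 ^ T)) (x : nat) :
  \sum_(y < 2 ^ T) th y 0 * ham_loss R T x y
  = A0 th + \sum_(t < T) Aco th t * (label_bit x t)%:R.
Proof.
transitivity (T%:R^-1 * \sum_(y < 2 ^ T) \sum_(t < T)
   (th y 0 * (label_bit y t)%:R + (label_bit x t)%:R * (th y 0 * (1 - 2 * (label_bit y t)%:R)))).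
  rewrite mulr_sumr; apply: eq_bigr => y _; rewrite /ham_loss mulrCA; congr (_ * _).
  by rewrite mulr_sumr; apply: eq_bigr => t _; rewrite bitneq; ring.
under eq_bigr do rewrite big_split /=.
rewrite big_split /= mulrDr; congr (_ + _).
  by rewrite /A0; congr (_ * _); apply: eq_bigr => y _; rewrite mulr_sumr.
rewrite exchange_big /= mulr_sumr; apply: eq_bigr => t _.
rewrite /Aco -mulr_sumr; ring.
Qed.

Lemma pred_spec (R : realType) k (f : 'cV[R]_k) (i0 : 'I_k) :
  exists i : 'I_k, pred_idx f = i /\ forall j, f j 0 <= f i 0.
Proof.
case: (@arg_maxP _ R _ i0 xpredT (fun i => f i 0) isT) => m _ Hm.
set P := (fun i : 'I_k => [forall j : 'I_k, f j 0 <= f i 0]).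
have hP : has P (enum 'I_k).
  apply/hasP; exists m; first by rewrite mem_enum.
  by apply/forallP => j; exact: Hm.
have hn : (find P (enum 'I_k) < k)%N.
  by have := hP; rewrite has_find size_enum_ord.
exists (Ordinal hn); split => //.
have := nth_find i0 hP.
have -> : nth i0 (enum 'I_k) (find P (enum 'I_k)) = Ordinal hn.
  by apply: val_inj; rewrite /= nth_enum_ord.
by move/forallP.
Qed.

Lemma pred_const (R : realType) k (f : 'cV[R]_k) :
  (0 < k)%N -> (forall i j, f i 0 = f j 0) -> pred_idx f = 0%N.
Proof.
move=> hk hf; rewrite /pred_idx.
have : (0 < size (enum 'I_k))%N by rewrite size_enum_ord.
case: (enum 'I_k) => //= x s _.
suff -> : [forall j, f j 0 <= f x 0] by [].
by apply/forallP => j; rewrite (hf j x).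
Qed.

Lemma Lq_entry (R : realType) T (th : 'cV[R]_(2 ^ T)) (c : 'I_(2 ^ T)) :
  (@ham_mx R T *m th) c 0 = \sum_(y < 2 ^ T) th y 0 * ham_loss R T c y.
Proof. by rewrite mxE; apply: eq_bigr => y _; rewrite mxE mulrC. Qed.

Lemma surr_diff (R : realType) T (q g : 'cV[R]_(2 ^ T)) :
  \sum_(c < 2 ^ T) q c 0 = 1 ->
  surr_risk (@quad_surr R T) g q - surr_risk (@quad_surr R T) (- (@ham_mx R T *m q)) q
  = (2 * (2 ^ T)%:R)^-1 * \sum_(c < 2 ^ T) (g c 0 + (@ham_mx R T *m q) c 0) ^+ 2.
Proof.
move=> Hq.
set κ := (2 * (2 ^ T)%:R)^-1.
rewrite /surr_risk -sumrB.
transitivity (\sum_(y < 2 ^ T) \sum_(c < 2 ^ T) q y 0 * (κ * ((g c 0 + @ham_mx R T c y) ^+ 2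
   - ((- (@ham_mx R T *m q)) c 0 + @ham_mx R T c y) ^+ 2))).
  apply: eq_bigr => y _; rewrite /quad_surr -/κ -mulrBr -mulrBr -sumrB.
  by rewrite mulr_sumr mulr_sumr.
rewrite exchange_big mulr_sumr; apply: eq_bigr => c _ /=.
rewrite Lq_entry mxE Lq_entry.
under eq_bigr do rewrite mxE.
set v := \sum_(y < 2 ^ T) q y 0 * ham_loss R T c y.
transitivity (\sum_(y < 2 ^ T) (κ * (g c 0 ^+ 2 - v ^+ 2)) * q y 0
   + \sum_(y < 2 ^ T) (2 * κ * (g c 0 + v)) * (q y 0 * ham_loss R T c y)).
  by rewrite -big_split; apply: eq_bigr => y _ /=; ring.
by rewrite -!mulr_sumr Hq -/v; ring.
Qed.

Lemma excess_surr_eq (R : realType) T (q f : 'cV[R]_(2 ^ T)) :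
  \sum_(c < 2 ^ T) q c 0 = 1 ->
  excess_surr (@quad_surr R T) (@ham_span R T) f q
  = (2 * (2 ^ T)%:R)^-1 * \sum_(c < 2 ^ T) (f c 0 + (@ham_mx R T *m q) c 0) ^+ 2.
Proof.
move=> Hq.
set E := [set surr_risk (@quad_surr R T) g q | g in @ham_span R T].
set m := surr_risk (@quad_surr R T) (- (@ham_mx R T *m q)) q.
have mem : E m by exists (- (@ham_mx R T *m q)) => //; exists (- q); rewrite mulmxN.
have lb : lbound E m.
  move=> _ [g _ <-]; rewrite -subr_ge0 /m surr_diff //.
  apply: mulr_ge0; first by rewrite invr_ge0 mulr_ge0 // ler0n.
  by apply: sumr_ge0 => c _; exact: sqr_ge0.
have Hin : inf E = m.
  apply/le_anti/andP; split.
    by apply: ge_inf => //; exists m.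
  by apply: lb_le_inf => //; exists m.
by rewrite /excess_surr -/E Hin /m surr_diff.
Qed.

Definition lo (R : realType) (x : R) := (x - `|x|) / 2.

Lemma task_risk_eq (R : realType) T (g q : 'cV[R]_(2 ^ T)) :
  task_risk (ham_loss R T) g q = A0 q + \sum_(t < T) Aco q t * (label_bit (pred_idx g) t)%:R.
Proof. by rewrite /task_risk ham_affine. Qed.

Lemma task_risk_ge0 (R : realType) T (g q : 'cV[R]_(2 ^ T)) :
  (forall c, 0 <= q c 0) -> 0 <= task_risk (ham_loss R T) g q.
Proof.
move=> hq; apply: sumr_ge0 => c _; apply: mulr_ge0 => //.
apply: mulr_ge0; first by rewrite invr_ge0 ler0n.
by apply: sumr_ge0 => t _; rewrite ler0n.
Qed.

Lemma task_inf_lb (R : realType) T (q : 'cV[R]_(2 ^ T)) :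
  A0 q + \sum_(t < T) lo (Aco q t) <= inf [set task_risk (ham_loss R T) g q | g in @ham_span R T].
Proof.
apply: lb_le_inf.
  by exists (task_risk (ham_loss R T) 0 q); exists 0 => //; exists 0; rewrite mulmx0.
move=> _ [g _ <-]; rewrite task_risk_eq lerD2l; apply: ler_sum => t _.
rewrite /lo; set x := Aco q t.
have [hx|hx] := lerP 0 x; [rewrite ger0_norm // | rewrite ltr0_norm //];
  case: (label_bit _ _) => /=; lra.
Qed.

Lemma task_inf_ub (R : realType) T (q g : 'cV[R]_(2 ^ T)) :
  (forall c, 0 <= q c 0) -> @ham_span R T g ->
  inf [set task_risk (ham_loss R T) g q | g in @ham_span R T] <= task_risk (ham_loss R T) g q.
Proof.
move=> hq hg; apply: ge_inf; last by exists g.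
by exists 0 => _ [h _ <-]; exact: task_risk_ge0.
Qed.

Lemma sign_cond (R : realType) T (th : 'cV[R]_(2 ^ T)) (i : 'I_(2 ^ T)) t :
  (forall j, (@ham_mx R T *m th) j 0 <= (@ham_mx R T *m th) i 0) -> (t < T)%N ->
  (label_bit i t -> 0 <= Aco th t) /\ (~~ label_bit i t -> Aco th t <= 0).
Proof.
move=> Hmax ht.
pose b := fun s => if s == t then ~~ label_bit i s else label_bit i s.
pose j := Ordinal (enc_lt b T).
have := Hmax j; rewrite !Lq_entry !ham_affine lerD2l.
have -> : \sum_(s < T) Aco th s * (label_bit j s)%:R
   = \sum_(s < T) Aco th s * (label_bit i s)%:R
     + Aco th t * ((~~ label_bit i t)%:R - (label_bit i t)%:R).
  rewrite (bigD1 (Ordinal ht)) //= [in RHS](bigD1 (Ordinal ht)) //=.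
  rewrite enc_bit // /b eqxx.
  rewrite (eq_bigr (fun s : 'I_T => Aco th s * (label_bit i s)%:R)); first by ring.
  move=> s hs; rewrite enc_bit // /b.
  by have -> : (nat_of_ord s == t) = false by apply/negbTE; move: hs; apply: contra => /eqP h; apply/eqP/val_inj.
by case: (label_bit i t) => /=; split => //; lra.
Qed.

Lemma lower_bound (R : realType) T (eps : R) (f q : 'cV[R]_(2 ^ T)) :
  (1 <= T)%N -> 0 <= eps -> simplex q -> @ham_span R T f ->
  eps <= excess_task (ham_loss R T) (@ham_span R T) f q ->
  eps ^+ 2 / (8 * T%:R) <= excess_surr (@quad_surr R T) (@ham_span R T) f q.
Proof.
move=> hT heps [hq0 hq1] [th Hf] Hex.
have [i [Hi Hmax]] := pred_spec f (Ordinal (expn_gt0 2 T)).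
pose C := Aco q.
pose d := fun t => Aco th t + C t.
pose e := fun t => C t * (label_bit i t)%:R - lo (C t).
have Hle : eps <= \sum_(t < T) e t.
  apply: (le_trans Hex); rewrite /excess_task task_risk_eq Hi.
  have := task_inf_lb q; rewrite /e sumrB -/C; lra.
have He : forall t : 'I_T, 0 <= e t /\ e t ^+ 2 <= d t ^+ 2.
  move=> t.
  have Hm' : forall j, (@ham_mx R T *m th) j 0 <= (@ham_mx R T *m th) i 0.
    by move=> j; rewrite -Hf; apply: Hmax.
  have [s1 s2] := sign_cond Hm' (ltn_ord t).
  move: s1 s2; rewrite /e /d /lo; move: (C t) (Aco th t) (label_bit i t) => x a b s1 s2.
  have [hx|hx] := lerP 0 x; [rewrite ger0_norm // | rewrite ltr0_norm //];
  case: b s1 s2 => /= s1 s2.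
  - have := s1 isT => h; have := sqr_ge0 (a + x); split; nra.
  - have := s2 isT => h; have := sqr_ge0 (a + x); split; nra.
  - have := s1 isT => h; have := sqr_ge0 (a + x); split; nra.
  - have := s2 isT => h; have := sqr_ge0 (a + x); split; nra.
have HT : (0 : R) < T%:R by rewrite ltr0n.
have H1 : eps ^+ 2 <= T%:R * \sum_(t < T) d t ^+ 2.
  apply: (le_trans _ (_ : T%:R * \sum_(t < T) e t ^+ 2 <= _)).
    apply: (le_trans _ (cs_ineq e hT)).
    have : 0 <= eps <= \sum_(t < T) e t by rewrite heps Hle.
    move=> /andP [h1 h2]; nra.
  rewrite ler_pM2l //; apply: ler_sum => t _; exact: (He t).2.
rewrite excess_surr_eq //.
have -> : \sum_(c < 2 ^ T) (f c 0 + (@ham_mx R T *m q) c 0) ^+ 2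
  = \sum_(c < 2 ^ T) ((A0 th + A0 q) + \sum_(t < T) d t * (label_bit c t)%:R) ^+ 2.
  apply: eq_bigr => c _; rewrite Hf !Lq_entry !ham_affine; congr (_ ^+ 2).
  rewrite /d /C [in RHS](eq_bigr (fun t : 'I_T => Aco th t * (label_bit c t)%:R + Aco q t * (label_bit c t)%:R)).
    by rewrite big_split /=; ring.
  by move=> t _; ring.
rewrite Qsum -mulr_suml.
set D := \sum_(t < T) d t ^+ 2.
set z := (A0 th + A0 q + (\sum_(t < T) d t) / 2).
have hk : (0 : R) < (2 ^ T)%:R by rewrite ltr0n expn_gt0.
have -> : (2 * (2 ^ T)%:R)^-1 * ((2 ^ T)%:R * (z ^+ 2 + D / 4)) = z ^+ 2 / 2 + D / 8.
  by field; lra.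
have : eps ^+ 2 / (8 * T%:R) <= D / 8.
  rewrite ler_pdivrMr; last by lra.
  have -> : D / 8 * (8 * T%:R) = T%:R * D by field.
  exact: H1.
have : 0 <= z ^+ 2 / 2 by apply: divr_ge0 => //; exact: sqr_ge0.
lra.
Qed.

Lemma sum_delta (R : realType) n (a : 'I_n) (G : 'I_n -> R) :
  \sum_(c < n) (c == a)%:R * G c = G a.
Proof.
rewrite (bigD1 a) //= eqxx mul1r big1 ?addr0 // => c /negbTE ->; by rewrite mul0r.
Qed.

Definition tp (R : realType) n (z w : 'I_n) (a b : R) : 'cV[R]_n :=
  \col_c (a * (c == z)%:R + b * (c == w)%:R).

Lemma sum_tp (R : realType) n (z w : 'I_n) (a b : R) (G : 'I_n -> R) :
  \sum_(c < n) tp z w a b c 0 * G c = a * G z + b * G w.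
Proof.
rewrite (eq_bigr (fun c => a * ((c == z)%:R * G c) + b * ((c == w)%:R * G c))).
  by rewrite big_split /= -!mulr_sumr !sum_delta.
by move=> c _; rewrite mxE; ring.
Qed.

Lemma ham0 (R : realType) T x :
  ham_loss R T x 0 = T%:R^-1 * \sum_(t < T) (label_bit x t)%:R.
Proof.
rewrite /ham_loss; congr (_ * _); apply: eq_bigr => t _.
by rewrite /label_bit div0n /=; case: (odd _).
Qed.

Lemma hamw (R : realType) T x :
  ham_loss R T x (enc (fun _ => true) T) = T%:R^-1 * \sum_(t < T) (1 - (label_bit x t)%:R).
Proof.
rewrite /ham_loss; congr (_ * _); apply: eq_bigr => t _.
by rewrite enc_bit //; case: (label_bit _ _) => /=; rewrite ?subrr ?subr0.
Qed.

Lemma label0 t : label_bit 0 t = false.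
Proof. by rewrite /label_bit div0n. Qed.

Lemma witness (R : realType) T (eps : R) : (1 <= T)%N -> 0 <= eps <= 1 ->
  exists f q, @ham_span R T f /\ simplex q /\
    eps <= excess_task (ham_loss R T) (@ham_span R T) f q /\
    excess_surr (@quad_surr R T) (@ham_span R T) f q = eps ^+ 2 / (8 * T%:R).
Proof.
move=> hT /andP [he0 he1].
have HT : (0 : R) < T%:R by rewrite ltr0n.
have HTn : T%:R != 0 :> R by rewrite gt_eqF.
pose z0 := Ordinal (expn_gt0 2 T).
pose w := Ordinal (enc_lt (fun _ => true) T).
pose p := (1 + eps) / 2.
pose q := tp z0 w (1 - p) p.
pose beta := eps / 2 - p.
pose f := tp z0 w beta beta.
have sumT : \sum_(t < T) (1 : R) = T%:R by rewrite sumr_const card_ord.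
have Lw0 : ham_loss R T w 0 = 1.
  rewrite ham0 (eq_bigr (fun _ => 1)) ?sumT ?mulVf // => t _.
  by rewrite enc_bit.
have Lww : ham_loss R T w w = 0.
  rewrite hamw big1 ?mulr0 // => t _; by rewrite enc_bit // subrr.
have L00 : ham_loss R T 0 0 = 0.
  by rewrite ham0 big1 ?mulr0 // => t _; rewrite label0.
have L0w : ham_loss R T 0 w = 1.
  rewrite hamw (eq_bigr (fun _ => 1)) ?sumT ?mulVf // => t _.
  by rewrite label0 subr0.
have Hfc : forall c : 'I_(2 ^ T), (@ham_mx R T *m f) c 0 = beta.
  move=> c; rewrite Lq_entry sum_tp /= ham0 hamw -mulrDr -mulrDr -big_split /=.
  rewrite (eq_bigr (fun _ => 1)) ?sumT; first by field.
  by move=> t _; ring.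
have Hq0 : forall c, 0 <= q c 0.
  move=> c; rewrite mxE; apply: addr_ge0; apply: mulr_ge0; rewrite ?ler0n //; rewrite /p; lra.
have Hq1 : \sum_(c < 2 ^ T) q c 0 = 1.
  by rewrite -(eq_bigr _ (fun c _ => mulr1 (q c 0))) sum_tp; ring.
pose f0 := @ham_mx R T *m f.
have Hspan : @ham_span R T f0 by exists f.
exists f0, q; split => //; split => //; split.
  rewrite /excess_task.
  have Hg : @ham_span R T (- (@ham_mx R T *m q)) by exists (- q); rewrite mulmxN.
  have := task_inf_ub Hq0 Hg.
  have -> : task_risk (ham_loss R T) f0 q = p.
    rewrite /task_risk (pred_const (f := f0)); last 2 first.
    - exact: expn_gt0.
    - by move=> i j; rewrite /f0 !Hfc.
    by rewrite (sum_tp _ _ _ _ (fun c : 'I_(2 ^ T) => ham_loss R T 0 c)) /= L00 L0w; ring.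
  have [i [Hi Hmax]] := pred_spec (- (@ham_mx R T *m q)) z0.
  have : task_risk (ham_loss R T) (- (@ham_mx R T *m q)) q <= 1 - p.
    rewrite /task_risk Hi -Lq_entry.
    have := Hmax w; rewrite !mxE.
    have -> : \sum_(j < 2 ^ T) ham_mx R T w j * q j 0 = 1 - p.
      rewrite (eq_bigr (fun j => q j 0 * ham_loss R T w j)).
        by rewrite (sum_tp _ _ _ _ (fun c : 'I_(2 ^ T) => ham_loss R T w c)) /= Lw0 Lww; ring.
      by move=> j _; rewrite mxE mulrC.
    lra.
  rewrite /p; lra.
rewrite excess_surr_eq //.
have Hc : forall c : 'I_(2 ^ T), f0 c 0 + (@ham_mx R T *m q) c 0
   = eps / 2 + \sum_(t < T) (- eps / T%:R) * (label_bit c t)%:R.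
  move=> c; rewrite /f0 Hfc Lq_entry sum_tp /= ham0 hamw.
  rewrite sumrB sumT -mulr_sumr.
  rewrite /beta /p; field => //.
under eq_bigr do rewrite Hc.
rewrite (Qsum T (eps / 2) (fun _ => - eps / T%:R)) -mulr_suml.
have hk : (2 ^ T)%:R != 0 :> R by rewrite pnatr_eq0 -lt0n expn_gt0.
rewrite !sumr_const !card_ord -[(- eps) *+ T]mulr_natl -[_ *+ T]mulr_natl.
by field; rewrite HTn hk.
Qed.

Unset Implicit Arguments.

Theorem proposition15 (R : realType) (T : nat) (eps : R) :
  (1 <= T)%N -> 0 <= eps <= 1 ->
  calibration (@quad_surr R T) (@ham_loss R T) (@ham_span R T) eps
  = (eps ^+ 2 / (8 * T%:R))%:E.
Proof.
move=> hT heps.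
have he0 : 0 <= eps by case/andP: heps.
rewrite /calibration.
apply/le_anti/andP; split.
- have [f [q [Hf [Hq [Hex Heq]]]]] := witness hT heps.
  rewrite -Heq; apply: ereal_inf_lbound; by exists (f, q).
- apply: le_ereal_inf_tmp => _ [[f q] [Hf [Hq Hex]] <-].
  rewrite lee_fin; exact: lower_bound.
Qed.
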